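(* Fix $m\in\mathbb{R}$ and $[\ell',r']\subset(\ell,r)$. Let $(h_i)_{i\geq1}$ be continuous concave functions on $[\ell,r]$ converging uniformly on $[\ell,r]$ to a continuous concave function $h_0$. Then $\liminf_{i\to\infty}\mathbf{l}(h_i)\geq\mathbf{l}(h_0)$ and $\limsup_{i\to\infty}\mathbf{r}(h_i)\leq\mathbf{r}(h_0)$.
   Context: For a continuous concave $h$ on $[\ell,r]$ with one-sided derivatives $h'_\pm(x)=\lim_{y\to x^\pm}\frac{h(y)-h(x)}{y-x}$: $\mathbf{l}(h)=\inf\{x\in[\ell',r']: h'_+(x)\leq m\}$ if this set is non-empty and $\mathbf{l}(h)=r'$ otherwise; $\mathbf{r}(h)=\sup\{x\in[\ell',r']: h'_-(x)\geq m\}$ if this set is non-empty and $\mathbf{r}(h)=\ell'$ otherwise. *)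

(* Defs.v *)
From HB Require Import structures.
From mathcomp Require Import all_boot all_order all_algebra.
From mathcomp Require Import all_classical all_reals all_analysis.
Set Implicit Arguments. Unset Strict Implicit. Unset Printing Implicit Defensive.
Import Order.TTheory GRing.Theory Num.Theory.
Import numFieldNormedType.Exports.
Local Open Scope classical_set_scope.
Local Open Scope ring_scope.

Definition concave_on (R : realType) (a b : R) (h : R -> R) : Prop :=
  forall x y t : R, a <= x <= b -> a <= y <= b -> 0 <= t <= 1 ->
    t * h x + (1 - t) * h y <= h (t * x + (1 - t) * y).

Definition rderiv (R : realType) (h : R -> R) (x : R) : R :=
  lim ((fun y => (h y - h x) / (y - x)) @ x^'+).
Definition lderiv (R : realType) (h : R -> R) (x : R) : R :=
  lim ((fun y => (h y - h x) / (y - x)) @ x^'-).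

Definition lpt (R : realType) (m l' r' : R) (h : R -> R) : R :=
  let S := [set x | l' <= x <= r' /\ rderiv h x <= m] in
  if asbool (S !=set0) then inf S else r'.
Definition rpt (R : realType) (m l' r' : R) (h : R -> R) : R :=
  let S := [set x | l' <= x <= r' /\ lderiv h x >= m] in
  if asbool (S !=set0) then sup S else l'.

(* Main.v *)
Require Import Defs.
From HB Require Import structures.
From mathcomp Require Import all_boot all_order all_algebra.
From mathcomp Require Import all_classical all_reals all_analysis.
From mathcomp Require Import ring lra.
Import Order.TTheory GRing.Theory Num.Theory.
Import numFieldNormedType.Exports.
Local Open Scope classical_set_scope.
Local Open Scope ring_scope.
Set Implicit Arguments. Unset Strict Implicit.

Section E.
Variable R : realType.

Lemma einf_ev (u : nat -> R) (b : R) (N : nat) :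
  (forall i, (N <= i)%N -> b <= u i) -> (b%:E <= limn_einf (fun i => (u i)%:E))%E.
Proof.
move=> H; rewrite limn_einf_lim; apply: lime_ge; first exact: is_cvg_einfs.
near=> n; apply: le_ereal_inf_tmp => _ [k /= nk <-]; rewrite lee_fin; apply: H.
apply: leq_trans nk; near: n; exists N => //.
Unshelve. all: by end_near. Qed.

Lemma esup_ev (u : nat -> R) (b : R) (N : nat) :
  (forall i, (N <= i)%N -> u i <= b) -> (limn_esup (fun i => (u i)%:E) <= b%:E)%E.
Proof.
move=> H; rewrite limn_esup_lim; apply: lime_le; first exact: is_cvg_esups.
near=> n; apply: ge_ereal_sup => _ [k /= nk <-]; rewrite lee_fin; apply: H.
apply: leq_trans nk; near: n; exists N => //.
Unshelve. all: by end_near. Qed.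

Lemma ge_below (x : R) (y : \bar R) : (forall b, b < x -> (b%:E <= y)%E) -> (x%:E <= y)%E.
Proof.
case: y => [t| |] H; last 2 first.
- by rewrite leey.
- by have := H (x - 1); rewrite ltrBlDr ltrDl ltr01 => /(_ isT).
rewrite lee_fin; apply/ler_addgt0Pr => e e0.
by rewrite -lerBlDr -lee_fin H // ltrBlDr ltrDl.
Qed.

Lemma le_above (x : R) (y : \bar R) : (forall b, x < b -> (y <= b%:E)%E) -> (y <= x%:E)%E.
Proof.
case: y => [t| |] H; last 2 first.
- by have := H (x + 1); rewrite ltrDl ltr01 => /(_ isT).
- by rewrite leNye.
rewrite lee_fin; apply/ler_addgt0Pr => e e0.
by rewrite -lee_fin H // ltrDl.
Qed.
End E.

Section S.
Variable R : realType.
Implicit Types h : R -> R.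
Definition Q (h : R -> R) (x y : R) := (h y - h x) / (y - x).

Lemma Qsym h x y : Q h x y = Q h y x.
Proof. by rewrite /Q -opprB -[y - x]opprB invrN mulrNN. Qed.

Lemma slope3 h l r x y z : concave_on l r h -> l <= x -> x < y -> y < z -> z <= r ->
  Q h x z <= Q h x y /\ Q h y z <= Q h x z.
Proof.
move=> H lx xy yz zr.
have zx : 0 < z - x by rewrite subr_gt0; exact: lt_trans yz.
have yx : 0 < y - x by rewrite subr_gt0.
have zy : 0 < z - y by rewrite subr_gt0.
have xin : l <= x <= r.
  by rewrite lx /= ltW // (lt_le_trans (lt_trans xy yz)).
have zin : l <= z <= r.
  by rewrite zr andbT ltW // (le_lt_trans lx (lt_trans xy yz)).
have tin : 0 <= (z - y) / (z - x) <= 1.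
  apply/andP; split; first by rewrite divr_ge0 // ltW.
  by rewrite ler_pdivrMr // mul1r lerD2l lerN2 ltW.
have := H x z ((z - y) / (z - x)) xin zin tin.
have -> : (z - y) / (z - x) * x + (1 - (z - y) / (z - x)) * z = y.
  by field; rewrite gt_eqF.
have -> : (z - y) / (z - x) * h x + (1 - (z - y) / (z - x)) * h z =
   ((z - y) * h x + (y - x) * h z) / (z - x).
  by field; rewrite gt_eqF.
rewrite ler_pdivrMr // => K.
have N : 0 <= h y * (z - x) - ((z - y) * h x + (y - x) * h z) by rewrite subr_ge0.
split; rewrite -subr_ge0.
- have -> : Q h x y - Q h x z =
    (h y * (z - x) - ((z - y) * h x + (y - x) * h z)) / ((y - x) * (z - x)).
    by rewrite /Q; field; rewrite !gt_eqF.
  by rewrite divr_ge0 // mulr_ge0 // ltW.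
- have -> : Q h x z - Q h y z =
    (h y * (z - x) - ((z - y) * h x + (y - x) * h z)) / ((z - x) * (z - y)).
    by rewrite /Q; field; rewrite !gt_eqF.
  by rewrite divr_ge0 // mulr_ge0 // ltW.
Qed.


Lemma rderiv_char h l r x : concave_on l r h -> l < x -> x < r ->
  rderiv h x = @sup R ((fun y => (h y - h x) / (y - x)) @` `]x, r]).
Proof.
move=> H lx xr; rewrite /rderiv; apply: cvg_lim; first exact: Rhausdorff.
apply: nonincreasing_at_right_cvgr; first by rewrite bnd_simp.
- move=> a b; rewrite !in_itv/= => /andP[xa ar] /andP[xb br] ab.
  move: ab; rewrite le_eqVlt => /orP[/eqP->//|ab].
  by have [] := slope3 H (ltW lx) xa ab br.
- exists (Q h l x) => _ [y /= /andP[xy yr] <-].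
  have [_ h1] := slope3 H (le_refl l) lx xy yr.
  have [h2 _] := slope3 H (le_refl l) lx xy yr.
  exact: (le_trans h1 h2).
Qed.

Lemma rderiv_ge h l r x c : concave_on l r h -> l < x -> x < c -> c <= r ->
  Q h x c <= rderiv h x.
Proof.
move=> H lx xc cr; rewrite (rderiv_char H lx (lt_le_trans xc cr)).
apply: sup_upper_bound; last by exists c; [rewrite /= in_itv/= xc cr|].
split; first by exists (Q h x c), c; [rewrite /= in_itv/= xc cr|].
exists (Q h l x) => _ [y /= /andP[xy yr] <-].
have [_ h1] := slope3 H (le_refl l) lx xy yr.
have [h2 _] := slope3 H (le_refl l) lx xy yr.
exact: (le_trans h1 h2).
Qed.

Lemma rderiv_gt h l r x m : concave_on l r h -> l < x -> x < r ->
  m < rderiv h x -> exists c, x < c <= r /\ m < Q h x c.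
Proof.
move=> H lx xr; rewrite (rderiv_char H lx xr) => mS.
case: (pselect (exists c, x < c <= r /\ m < Q h x c)) => // Hn; exfalso.
move: mS; apply/negP; rewrite -leNgt; apply: ge_sup.
  by exists (Q h x r), r; [rewrite /= in_itv/= xr lexx|].
move=> _ [y /= yin <-]; rewrite leNgt; apply/negP => my; apply: Hn.
by exists y; split.
Qed.

Lemma lderiv_char h l r x : concave_on l r h -> l < x -> x < r ->
  lderiv h x = @inf R (((fun y => (h y - h x) / (y - x)) \o -%R) @` `]-x, -l]).
Proof.
move=> H lx xr; rewrite /lderiv; apply: cvg_lim; first exact: Rhausdorff. apply/cvg_at_leftNP.
apply: nondecreasing_at_right_cvgr; first by rewrite bnd_simp ltrN2.
- move=> a b; rewrite !in_itv/= => /andP[xa al] /andP[xb bl] ab.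
  move: ab; rewrite le_eqVlt => /orP[/eqP->//|ab].
  rewrite -!/(Q h x _) !(Qsym h x).
  have [] := slope3 H (_ : l <= - b) (_ : - b < - a) (_ : - a < x) (ltW xr).
  + by rewrite lerNr.
  + by rewrite ltrN2.
  + by rewrite ltrNl.
  by [].
- exists (Q h x r) => _ [y /= /andP[xy yl] <-].
  rewrite -/(Q h x _) (Qsym h x (-y)).
  have ly : l <= - y by rewrite lerNr.
  have yx : - y < x by rewrite ltrNl.
  have [h1 _] := slope3 H ly yx xr (le_refl r).
  have [_ h2] := slope3 H ly yx xr (le_refl r).
  exact: (le_trans h2 h1).
Qed.

Lemma lderiv_le h l r x c : concave_on l r h -> l <= c -> c < x -> x < r ->
  lderiv h x <= Q h c x.
Proof.
move=> H lc cx xr; rewrite (lderiv_char H (le_lt_trans lc cx) xr).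
apply: ge_inf; last first.
  exists (- c); first by rewrite /= in_itv/= ltrN2 cx lerN2 lc.
  by rewrite /= opprK -/(Q h x c) Qsym.
exists (Q h x r) => _ [y /= /andP[xy yl] <-].
rewrite -/(Q h x _) (Qsym h x (-y)).
have ly : l <= - y by rewrite lerNr.
have yx : - y < x by rewrite ltrNl.
have [h1 _] := slope3 H ly yx xr (le_refl r).
have [_ h2] := slope3 H ly yx xr (le_refl r).
exact: (le_trans h2 h1).
Qed.

Lemma lderiv_lt h l r x m : concave_on l r h -> l < x -> x < r ->
  lderiv h x < m -> exists c, l <= c < x /\ Q h c x < m.
Proof.
move=> H lx xr; rewrite (lderiv_char H lx xr) => mS.
case: (pselect (exists c, l <= c < x /\ Q h c x < m)) => // Hn; exfalso.
move: mS; apply/negP; rewrite -leNgt; apply: lb_le_inf.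
  by exists (Q h x l), (- l); [rewrite /= in_itv/= ltrN2 lx lexx|rewrite /= opprK].
move=> _ [y /= + <-]; rewrite in_itv/= => /andP[xy yl]; rewrite -/(Q h x _) (Qsym h x (-y)).
rewrite leNgt; apply/negP => my; apply: Hn.
by exists (- y); split => //; rewrite lerNr yl ltrNl.
Qed.
End S.

Unset Implicit Arguments.

Theorem mainTheorem19 (R : realType) (m l r l' r' : R)
  (h : nat -> R -> R) (h0 : R -> R) :
  l < l' -> l' <= r' -> r' < r ->
  (forall i, {within `[l, r], continuous (h i)}) ->
  (forall i, concave_on l r (h i)) ->
  {within `[l, r], continuous h0} ->
  concave_on l r h0 ->
  (forall e : R, 0 < e -> exists N : nat, forall i : nat, (N <= i)%N ->
     forall x : R, l <= x <= r -> `|h i x - h0 x| < e) ->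
  ((lpt m l' r' h0)%:E <= limn_einf (fun i => (lpt m l' r' (h i))%:E))%E /\
  (limn_esup (fun i => (rpt m l' r' (h i))%:E) <= (rpt m l' r' h0)%:E)%E.
Proof.
move=> ll' l'r' r'r _ Hc _ H0 U.
have lptge : forall g, l' <= lpt m l' r' g.
  move=> g; rewrite /lpt; case: asboolP => // ne.
  by apply: lb_le_inf => // x [/andP[]].
have lptle : forall g, lpt m l' r' g <= r'.
  move=> g; rewrite /lpt; case: asboolP => // -[x [/andP[lx xr] rx]].
  apply: (le_trans _ xr); apply: ge_inf; last by split => //; rewrite lx xr.
  by exists l' => y [/andP[]].
have rptle : forall g, rpt m l' r' g <= r'.
  move=> g; rewrite /rpt; case: asboolP => // ne.
  by apply: ge_sup => // x [/andP[]].
have rptge : forall g, l' <= rpt m l' r' g.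
  move=> g; rewrite /rpt; case: asboolP => // -[x [/andP[lx xr] rx]].
  apply: (le_trans lx); apply: sup_upper_bound; last by split => //; rewrite lx xr.
  split; first by exists x; split => //; rewrite lx xr.
  by exists r' => y [/andP[]].
split.
- apply: ge_below => b bL.
  case: (ltP b l') => [bl|lb].
    by apply: (@einf_ev _ _ _ 0) => i _; exact: ltW (lt_le_trans bl (lptge _)).
  have br' : b < r' := lt_le_trans bL (lptle h0).
  have lb' : l < b := lt_le_trans ll' lb.
  have br : b < r := lt_trans br' r'r.
  have mb : m < rderiv h0 b.
    rewrite ltNge; apply/negP => bm; move: bL; apply/negP; rewrite -leNgt.
    rewrite /lpt; case: asboolP => [ne|]; last first.
      by move=> ne; exfalso; apply: ne; exists b; split => //; rewrite lb ltW.
    apply: ge_inf; last by split => //; rewrite lb ltW.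
    by exists l' => y [/andP[]].
  have [c [/andP[bc cr] mQ]] := rderiv_gt H0 lb' br mb.
  set d := c - b.
  have d0 : 0 < d by rewrite subr_gt0.
  set del := Q h0 b c - m.
  have del0 : 0 < del by rewrite subr_gt0.
  have e0 : 0 < del * d / 2 by rewrite divr_gt0 // mulr_gt0.
  have [N HN] := U _ e0.
  apply: (@einf_ev _ _ _ N) => i iN.
  have Qi : m < Q (h i) b c.
    have A : h0 c - h0 b = m * d + del * d.
      by rewrite /del /Q -/d; field; rewrite gt_eqF.
    have := HN i iN c; rewrite (ltW (lt_le_trans ll' (le_trans lb (ltW bc)))) cr.
    move=> /(_ isT); rewrite ltr_norml => /andP[c1 c2].
    have := HN i iN b; rewrite (ltW lb') (ltW br) => /(_ isT).
    rewrite ltr_norml => /andP[b1 b2].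
    rewrite /Q -/d ltr_pdivlMr //.
    lra.
  rewrite /lpt; case: asboolP => [ne|_]; last exact: ltW.
  apply: lb_le_inf => // x [/andP[l'x xr'] rx].
  rewrite leNgt; apply/negP => xb.
  have lx : l < x := lt_le_trans ll' l'x.
  have xc : x < c := lt_trans xb bc.
  have := rderiv_ge (Hc i) lx xc cr.
  have [_ s2] := slope3 (Hc i) (ltW lx) xb bc cr.
  move=> s3; have := lt_le_trans Qi (le_trans s2 s3).
  by rewrite ltNge rx.
- apply: le_above => b Rb.
  case: (ltP r' b) => [rb|br'].
    by apply: (@esup_ev _ _ _ 0) => i _; exact: ltW (le_lt_trans (rptle _) rb).
  have lb : l' < b := le_lt_trans (rptge h0) Rb.
  have lb' : l < b := lt_trans ll' lb.
  have br : b < r := le_lt_trans br' r'r.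
  have mb : lderiv h0 b < m.
    rewrite ltNge; apply/negP => bm; move: Rb; apply/negP; rewrite -leNgt.
    rewrite /rpt; case: asboolP => [ne|]; last first.
      by move=> ne; exfalso; apply: ne; exists b; split => //; rewrite br' ltW.
    apply: sup_upper_bound; last by split => //; rewrite br' ltW.
    split; first by exists b; split => //; rewrite br' ltW.
    by exists r' => y [/andP[]].
  have [c [/andP[lc cb] mQ]] := lderiv_lt H0 lb' br mb.
  set d := b - c.
  have d0 : 0 < d by rewrite subr_gt0.
  set del := m - Q h0 c b.
  have del0 : 0 < del by rewrite subr_gt0.
  have e0 : 0 < del * d / 2 by rewrite divr_gt0 // mulr_gt0.
  have [N HN] := U _ e0.
  apply: (@esup_ev _ _ _ N) => i iN.
  have Qi : Q (h i) c b < m.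
    have A : h0 b - h0 c = m * d - del * d.
      by rewrite /del /Q -/d; field; rewrite gt_eqF.
    have := HN i iN c; rewrite lc (ltW (lt_trans cb br)).
    move=> /(_ isT); rewrite ltr_norml => /andP[c1 c2].
    have := HN i iN b; rewrite (ltW lb') (ltW br) => /(_ isT).
    rewrite ltr_norml => /andP[b1 b2].
    rewrite /Q -/d ltr_pdivrMr //.
    lra.
  rewrite /rpt; case: asboolP => [ne|_]; last exact: ltW.
  apply: ge_sup => // x [/andP[l'x xr'] rx].
  rewrite leNgt; apply/negP => bx.
  have xr : x < r := le_lt_trans xr' r'r.
  have cx : c < x := lt_trans cb bx.
  have := lderiv_le (Hc i) lc cx xr.
  have [s1 _] := slope3 (Hc i) lc cb bx (ltW xr).
  move=> s3; have := le_lt_trans (le_trans s3 s1) Qi.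
  by rewrite ltNge rx.
Qed.
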